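(* There is a deterministic algorithm which, given $n$ elements, makes $\binom{n}{2}$ comparisons and outputs a $1$-max-set of size at most $\lceil \log_2 n\rceil$.
   Context: Model of imprecise comparisons: there are $n$ elements, each with a fixed unknown real value; we identify an element with its value. Asked to compare $x_i$ and $x_j$, the comparator answers either ''$x_i \ge x_j$'' or ''$x_j \ge x_i$''. If $|x_i-x_j|>1$ the answer is correct; if $|x_i-x_j|\le 1$ the answer is arbitrary (possibly adversarial and adaptive). Let $x^*$ be the maximum value of an input element. A $k$-max-set is a subset of the input elements containing at least one element of value at least $x^*-k$. The guarantee must hold for every input and every comparator behaviour consistent with these rules. *)

(* Defs.v *)
From HB Require Import structures.
From mathcomp Require Import all_boot all_order all_algebra.
From mathcomp Require Import reals.
Set Implicit Arguments. Unset Strict Implicit. Unset Printing Implicit Defensive.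
Import Order.TTheory GRing.Theory Num.Theory.
Local Open Scope ring_scope.

(* A deterministic comparison algorithm on the elements 'I_n, as a decision
   tree.  [Cmp i j t1 t2] asks the comparator about x_i and x_j; it continues
   with [t1] if the answer is "x_i >= x_j" and with [t2] if the answer is
   "x_j >= x_i".  [Out S] stops and outputs the subset S. *)
Inductive ctree (n : nat) : Type :=
| Out : {set 'I_n} -> ctree n
| Cmp : 'I_n -> 'I_n -> ctree n -> ctree n -> ctree n.

(* [run x t k S]: on input values x, some comparator behaviour consistent with
   the imprecise-comparison model (if |x_i - x_j| > 1 the answer is correct,
   otherwise arbitrary, possibly adversarial and adaptive) leads the algorithm
   t to make exactly k comparisons and output S. *)
Inductive run (R : realType) (n : nat) (x : 'I_n -> R) :
  ctree n -> nat -> {set 'I_n} -> Prop :=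
| run_out (S : {set 'I_n}) : run x (Out S) 0 S
| run_ge (i j : 'I_n) (t1 t2 : ctree n) (k : nat) (S : {set 'I_n}) :
    x j <= x i + 1 -> run x t1 k S -> run x (Cmp i j t1 t2) k.+1 S
| run_le (i j : 'I_n) (t1 t2 : ctree n) (k : nat) (S : {set 'I_n}) :
    x i <= x j + 1 -> run x t2 k S -> run x (Cmp i j t1 t2) k.+1 S.

(* S is a k-max-set: it contains some s with x_s >= x^* - k, where x^* is the
   maximum value; written as: x_s >= x_i - k for every element i. *)
Definition kmaxset (R : realType) (n : nat) (x : 'I_n -> R) (k : R)
  (S : {set 'I_n}) : Prop :=
  exists2 s, s \in S & forall i : 'I_n, x i - k <= x s.

(* Main.v *)
Require Import Defs.
From HB Require Import structures.
From mathcomp Require Import all_boot all_order all_algebra.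
From mathcomp Require Import reals.
From mathcomp Require Import zify lra.
Import Order.TTheory GRing.Theory Num.Theory.
Local Open Scope ring_scope.
Set Warnings "-notation-overridden".
Local Open Scope nat_scope.
Set Implicit Arguments. Unset Strict Implicit.

Definition Bset N (b : 'I_N -> 'I_N -> bool) (A : {set 'I_N}) (u : 'I_N) :=
  [set v in A | (v != u) && b u v].
Definition score N (b : 'I_N -> 'I_N -> bool) (A : {set 'I_N}) (u : 'I_N) :=
  if u \in A then #|Bset b A u|.+1 else 0.
Definition best N (b : 'I_N -> 'I_N -> bool) (d : 'I_N) (A : {set 'I_N}) :=
  [arg max_(i > d) score b A i].
Fixpoint greedy N (b : 'I_N -> 'I_N -> bool) (d : 'I_N) (f : nat) (A : {set 'I_N}) :=
  match f with
  | 0 => set0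
  | f.+1 => if A == set0 then set0 else
      let u := best b d A in u |: greedy b d f (A :\: (u |: Bset b A u))
  end.

Lemma greedyS N b d f (A : {set 'I_N}) : greedy b d f.+1 A =
  if A == set0 then set0 else
      best b d A |: greedy b d f (A :\: (best b d A |: Bset b A (best b d A))).
Proof. by []. Qed.

Lemma best_in N b d (A : {set 'I_N}) : A != set0 -> best b d A \in A.
Proof.
case/set0Pn=> w wA; rewrite /best; case: arg_maxnP => // u _ H.
have := H w isT; rewrite /score wA; by case: (u \in A).
Qed.

Lemma card_sum N (A : {set 'I_N}) (P : pred 'I_N) :
  #|[set v in A | P v]| = \sum_(v in A) (P v : nat).
Proof.
rewrite -sum1_card (eq_bigl (fun v => (v \in A) && P v)); last by move=> v; rewrite inE.
rewrite big_mkcondr /=; apply: eq_bigr => v _; by case: (P v).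
Qed.

Lemma best_max N b d (A : {set 'I_N}) w : w \in A ->
  #|Bset b A w| <= #|Bset b A (best b d A)|.
Proof.
move=> wA; have uA : best b d A \in A by apply: best_in; apply/set0Pn; exists w.
move: uA; rewrite /best; case: arg_maxnP => // u _ H uA.
by have := H w isT; rewrite /score wA uA.
Qed.

Lemma best_big N b d (A : {set 'I_N})
  (cA : forall u v, u \in A -> v \in A -> u != v -> b u v || b v u) :
  A != set0 -> (#|A|).-1 <= 2 * #|Bset b A (best b d A)|.
Proof.
move=> A0; set u := best b d A.
have S1 : \sum_(w in A) #|Bset b A w| <= #|A| * #|Bset b A u|.
  rewrite -sum_nat_const; apply: leq_sum => w wA; exact: best_max.
have S2 : #|A| * (#|A|).-1 <= 2 * \sum_(w in A) #|Bset b A w|.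
  rewrite mul2n -addnn {2}(eq_bigr _ (fun w _ => card_sum A _)).
  rewrite exchange_big /=.
  rewrite (eq_bigr _ (fun w _ => card_sum A _)) -big_split /=.
  rewrite -sum_nat_const; apply: leq_sum => w wA.
  have -> : (#|A|).-1 = #|[set v in A | v != w]|.
    have -> : [set v in A | v != w] = A :\ w.
      by apply/setP => v; rewrite !inE andbC.
    by rewrite (cardsD1 w A) wA.
  rewrite card_sum -big_split /=; apply: leq_sum => v vA.
  case: (v =P w) => [->|/eqP ne] //=.
  rewrite eq_sym ne /=; have := cA w v wA vA.
  rewrite eq_sym => /(_ ne).
  by case: (b w v); case: (b v w) => //; rewrite eq_sym.
have Apos : 0 < #|A| by rewrite card_gt0.
rewrite -(leq_pmul2l Apos); apply: (leq_trans S2).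
by rewrite mulnCA leq_mul2l S1 orbT.
Qed.

Lemma next_card N b d (A : {set 'I_N})
  (cA : forall u v, u \in A -> v \in A -> u != v -> b u v || b v u) :
  A != set0 ->
  (#|A :\: (best b d A |: Bset b A (best b d A))|).*2.+1 <= #|A|.
Proof.
move=> A0; set u := best b d A; have uA : u \in A by apply: best_in.
have H := best_big d cA A0; rewrite -/u in H.
have uB : u \notin Bset b A u by rewrite inE eqxx andbF.
have sub : u |: Bset b A u \subset A.
  by apply/subsetP => v; rewrite !inE => /orP[/eqP->//|/andP[]].
have := cardsID (u |: Bset b A u) A.
rewrite (setIidPr sub) cardsU1 uB /=.
move: H; rewrite -addnn; move: #|A| #|Bset b A u| #|A :\: (u |: Bset b A u)| => m x y; lia.
Qed.

Lemma greedy_dom N b d f (A : {set 'I_N}) : #|A| <= f ->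
  forall v, v \in A -> v \in greedy b d f A \/ exists2 s, s \in greedy b d f A & b s v.
Proof.
elim: f A => [|f IH] A.
  by rewrite leqn0 cards_eq0 => /eqP -> v; rewrite inE.
move=> Af v vA /=.
have A0 : A != set0 by apply/set0Pn; exists v.
rewrite (negbTE A0); set u := best b d A.
have uA : u \in A by apply: best_in.
case: (v =P u) => [->|/eqP ne]; first by left; rewrite setU11.
case bv: (b u v).
  by right; exists u; rewrite ?setU11.
have vA' : v \in A :\: (u |: Bset b A u) by rewrite !inE vA (negbTE ne) bv !andbF.
have card' : #|A :\: (u |: Bset b A u)| <= f.
  rewrite -ltnS; apply: leq_trans Af; apply: proper_card.
  apply/properP; split; first exact: subsetDl.
  by exists u => //; rewrite !inE eqxx.
case: (IH _ card' v vA') => [H|[s sG bs]].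
  by left; rewrite setU1r.
by right; exists s => //; rewrite setU1r.
Qed.

Lemma greedy_card N b d f (A : {set 'I_N})
  (cA : forall u v, u \in A -> v \in A -> u != v -> b u v || b v u) :
  forall k, #|A| < 2 ^ k -> #|greedy b d f A| <= k.
Proof.
elim: f A cA => [|f IH] A cA k Ak /=; first by rewrite cards0.
case: ifP => [_|/negbT A0]; first by rewrite cards0.
have Hn := next_card d cA A0.
set u := best b d A in Hn *; set A' := A :\: _ in Hn *.
case: k Ak => [|k] Ak.
  by move: Ak; rewrite expn0 ltnS leqn0 cards_eq0 (negbTE A0).
rewrite cardsU1 -add1n; apply: leq_add; first by case: (_ \notin _).
apply: IH.
  move=> x y; rewrite !inE => /andP[_ xA] /andP[_ yA]; exact: cA.
rewrite expnS in Ak; move: Hn Ak; rewrite -addnn; move: #|A| #|A'| (2 ^ k) => m x y; lia.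
Qed.
Local Open Scope ring_scope.

Fixpoint build {N} (g : ('I_N -> 'I_N -> bool) -> {set 'I_N})
  (ps : seq ('I_N * 'I_N)) (b : 'I_N -> 'I_N -> bool) : ctree N :=
  match ps with
  | [::] => Out (g b)
  | p :: ps' => Cmp p.1 p.2
      (build g ps' (fun u v => b u v || ((u == p.1) && (v == p.2))))
      (build g ps' (fun u v => b u v || ((u == p.2) && (v == p.1))))
  end.


Lemma run_build (R : realType) N (x : 'I_N -> R) g ps :
  forall b k S, run x (build g ps b) k S ->
  (forall u v, b u v -> x v <= x u + 1) ->
  (k = size ps)%N /\ exists b' : 'I_N -> 'I_N -> bool, [/\ (forall u v, b' u v -> x v <= x u + 1),
     (forall u v, b u v -> b' u v),
     (forall p, p \in ps -> b' p.1 p.2 || b' p.2 p.1) & S = g b'].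
Proof.
elim: ps => [|p ps IH] b k S /= H sb.
  inversion H; subst; split => //; exists b; split => //.
inversion H; subst.
- have sb' : forall u v, (b u v || ((u == p.1) && (v == p.2))) -> x v <= x u + 1.
    move=> u v /orP[/sb //|/andP[/eqP -> /eqP ->]] //.
  have [-> [b' [s' m' c' e']]] := IH _ _ _ H7 sb'.
  split => //; exists b'; split => //.
    by move=> u v buv; apply: m'; rewrite buv.
  move=> q; rewrite inE => /orP[/eqP ->|/c' //].
  by rewrite m' // !eqxx orbT.
- have sb' : forall u v, (b u v || ((u == p.2) && (v == p.1))) -> x v <= x u + 1.
    move=> u v /orP[/sb //|/andP[/eqP -> /eqP ->]] //.
  have [-> [b' [s' m' c' e']]] := IH _ _ _ H7 sb'.
  split => //; exists b'; split => //.
    by move=> u v buv; apply: m'; rewrite buv.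
  move=> q; rewrite inE => /orP[/eqP ->|/c' //].
  by rewrite (m' p.2 p.1) ?orbT // !eqxx orbT.
Qed.

Unset Implicit Arguments. Set Strict Implicit.
Theorem mainTheorem4 (n : nat) (hn : (2 <= n)%N) :
  exists t : ctree n,
    forall (R : realType) (x : 'I_n -> R) (k : nat) (S : {set 'I_n}),
      run x t k S ->
      [/\ (k <= 'C(n, 2))%N, (#|S| <= up_log 2 n)%N & kmaxset x 1 S].
Proof.
case: n hn => [|[|n]] // _.
pose d : 'I_n.+2 := ord0.
pose T := [set t : 2.-tuple 'I_n.+2 | sorted ltn (map val t)].
pose ps := [seq (tnth t ord0, tnth t ord_max) | t <- enum T].
pose g b := greedy b d n.+2 setT.
exists (build g ps (fun _ _ => false)).
move=> R x k S /run_build [] // -> [b' [sb _ cov ->]].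
have cA : forall u v, u \in [set: 'I_n.+2] -> v \in [set: 'I_n.+2] ->
    u != v -> b' u v || b' v u.
  move=> u v _ _ ne.
  wlog lt: u v ne / (u < v)%N.
    move=> W; case: (ltngtP u v) => h; first exact: W.
      by rewrite orbC; apply: W => //; rewrite eq_sym.
    by exfalso; move/eqP: ne; apply; apply: val_inj.
  apply: (cov (u, v)); apply/mapP; exists [tuple u; v] => //.
  by rewrite mem_enum inE /= andbT.
have A0 : [set: 'I_n.+2] != set0 by apply/set0Pn; exists d.
split.
- by rewrite size_map -cardE card_ltn_sorted_tuples.
- rewrite /g greedyS (negbTE A0) cardsU1.
  have he : (0 < up_log 2 n.+2)%N by rewrite up_log_gt0.
  have hN := @up_logP 2 n.+2 isT.
  move: he hN; case: (up_log 2 n.+2) => [|e] // _ hN.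
  apply: (@leq_add _ _ 1 e); first by case: (_ \notin _).
  apply: greedy_card.
    move=> u v; rewrite !inE => /andP[_ uA] /andP[_ vA]; exact: cA.
  have := next_card d cA A0; rewrite cardsT card_ord -addnn; move: hN; rewrite expnS.
  move: (2 ^ e)%N #|_ :\: _| => a y; lia.
- have [im Him] : exists im, forall i, x i <= x im.
    exists (Order.arg_max d xpredT x); case: arg_maxP => //= j _ H i.
    exact: H.
  have := @greedy_dom _ b' d n.+2 setT _ im (in_setT _).
  case; first by rewrite cardsT card_ord.
    move=> imS; exists im => // i; have := Him i; lra.
  move=> [s sS bs]; exists s => // i; have := Him i; have := sb _ _ bs; lra.
Qed.
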